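(* In the execution model described in the context, let $T(t)$ be the time needed for the system to execute a schedule of $t$ iterations. If every node performs a local computation at each iteration with probability $p_{\rm comp}/n$, with $p_{\rm comp}>p^{\max}_{\rm comm}$, or if $\tau>1$, then there exists a constant $C<24$ such that $$\mathbb{P}\Big(\frac{1}{t}T(t)\le \frac{C}{n}\big(p_{\rm comp}+2\tau p^{\max}_{\rm comm}\big)\Big)\to1\quad\text{as }t\to\infty.$$
   Context: Execution model. There are $n$ nodes connected by an undirected communication graph $G$ with edge set $E^{\rm comm}$; $\mathcal{N}(k)$ denotes the neighbors of $k$ in $G$. A schedule is an i.i.d. sequence of updates: at each iteration, either a communication edge $(k,\ell)\in E^{\rm comm}$ is chosen with probability $p_{k\ell}$, or a node performs a local computation update; $p_{\rm comm}=\sum_{(k,\ell)\in E^{\rm comm}}p_{k\ell}$ and $p_{\rm comp}=1-p_{\rm comm}$ is the total probability of a local update. A local update at a node takes time $1$ and involves only that node; a communication update on $(k,\ell)$ takes time $\tau>0$ and involves both $k$ and $\ell$; each node executes its updates in the order of the schedule. Formally, with $T_i(0)=0$: if iteration $t$ is a communication on $(k,\ell)$ then $T_k(t+1)=T_\ell(t+1)=\max(T_k(t),T_\ell(t))+\tau$; if it is a local update at $k$ then $T_k(t+1)=T_k(t)+1$; all other $T_i$ are unchanged. $T(t)=\max_iT_i(t)$. Finally $p^{\max}_{\rm comm}=\frac{n}{2}\max_k\sum_{\ell\in\mathcal{N}(k)}p_{k\ell}$. *)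

(* Defs.v *)
From HB Require Import structures.
From mathcomp Require Import all_boot all_order all_algebra.
From mathcomp Require Import all_classical all_reals all_analysis.
Set Implicit Arguments. Unset Strict Implicit. Unset Printing Implicit Defensive.
Import Order.TTheory GRing.Theory Num.Theory.
Local Open Scope ring_scope.

Section Model.
Variables (R : realType) (n : nat).

(* An iteration of the schedule: either a communication update on the edge
   {k,l} (encoded as the ordered pair (k,l) with k < l), or a local
   computation update at node k. *)
Definition action := (('I_n * 'I_n) + 'I_n)%type.

(* p k l : probability p_{kl} of the (undirected) edge {k,l}; given as a
   symmetric function, zero outside the communication graph. *)
Definition p_comm (p : 'I_n -> 'I_n -> R) : R :=
  \sum_(k < n) \sum_(l < n | (k < l)%N) p k l.

Definition p_comp (p : 'I_n -> 'I_n -> R) : R := 1 - p_comm p.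

Definition p_comm_max (adj : rel 'I_n) (p : 'I_n -> 'I_n -> R) : R :=
  n%:R / 2 * \big[Num.max/0]_(k < n) \sum_(l < n | adj k l) p k l.

Definition act_prob (p : 'I_n -> 'I_n -> R) (a : action) : R :=
  match a with
  | inl (k, l) => if (k < l)%N then p k l else 0
  | inr k => p_comp p / n%:R
  end.

Definition step (tau : R) (T : 'I_n -> R) (a : action) : 'I_n -> R :=
  match a with
  | inl (k, l) => fun i => if (i == k) || (i == l)
                           then Num.max (T k) (T l) + tau else T i
  | inr k => fun i => if i == k then T k + 1 else T i
  end.

Definition node_times (tau : R) (s : seq action) : 'I_n -> R :=
  foldl (step tau) (fun _ => 0) s.

(* T(t) = max_i T_i(t)  (all T_i are >= 0, so 0 is a neutral base). *)
Definition total_time (tau : R) (s : seq action) : R :=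
  \big[Num.max/0]_(i < n) node_times tau s i.

(* Probability, under the i.i.d. schedule, that the first t iterations
   satisfy the event E (events depending only on the first t iterations). *)
Definition sched_prob (p : 'I_n -> 'I_n -> R) (t : nat)
    (E : t.-tuple action -> bool) : R :=
  \sum_(s : t.-tuple action | E s) \prod_(i < t) act_prob p (tnth s i).

End Model.

(* Main.v *)
Require Import Defs.
From HB Require Import structures.
From mathcomp Require Import all_boot all_order all_algebra.
From mathcomp Require Import all_classical all_reals all_analysis.
From mathcomp Require Import ring lra.
Import Order.TTheory GRing.Theory Num.Theory.
Import numFieldNormedType.Exports.
Local Open Scope classical_set_scope.
Local Open Scope ring_scope.
Set Implicit Arguments. Unset Strict Implicit. Unset Printing Implicit Defensive.

Section Aux.
Variables (R : realType) (n : nat).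
Implicit Types (p : 'I_n -> 'I_n -> R) (adj : rel 'I_n).

Definition stepY (E1 Et : R) (Y : 'I_n -> R) (a : action n) : 'I_n -> R :=
  match a with
  | inl (k, l) => fun i => if (i == k) || (i == l) then Et * (Y k + Y l) else Y i
  | inr k => fun i => if i == k then E1 * Y k else Y i
  end.

Lemma dom_fold (th tau : R) (s : seq (action n)) (T0 Y0 : 'I_n -> R) :
  (forall i, expR (th * T0 i) <= Y0 i) ->
  forall i, expR (th * foldl (step tau) T0 s i)
            <= foldl (stepY (expR th) (expR (th * tau))) Y0 s i.
Proof.
elim: s T0 Y0 => [|a s IH] T0 Y0 H //=.
apply: IH => i; case: a => [[k l]|k] /=.
- case: ifP => _; last exact: H.
  rewrite mulrDr expRD [X in _ <= X]mulrC; apply: ler_wpM2r; first exact: expR_ge0.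
  have hk := H k; have hl := H l.
  have Yk0 := le_trans (expR_ge0 _) hk; have Yl0 := le_trans (expR_ge0 _) hl.
  rewrite maxEle; case: ifP => _; lra.
- case: ifP => _; last exact: H.
  rewrite mulrDr mulr1 expRD [X in _ <= X]mulrC; apply: ler_wpM2r; first exact: expR_ge0.
  exact: H.
Qed.

Lemma sum_stepY_comm E1 Et Y (k l : 'I_n) : k != l ->
  \sum_i stepY E1 Et Y (inl (k, l)) i = \sum_i Y i + (2 * Et - 1) * (Y k + Y l).
Proof.
move=> kl /=; have lk : l != k by rewrite eq_sym.
rewrite [LHS](bigD1 k) // [in LHS](bigD1 l) //= [in RHS](bigD1 k) // [in RHS](bigD1 l) //=.
rewrite !eqxx ?orbT /=.
rewrite (eq_bigr Y); last by move=> i /andP [ik il]; rewrite (negbTE ik) (negbTE il).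
ring.
Qed.

Lemma sum_stepY_loc E1 Et Y (k : 'I_n) :
  \sum_i stepY E1 Et Y (inr k) i = \sum_i Y i + (E1 - 1) * Y k.
Proof.
rewrite /= (bigD1 k) // [X in _ = X + _](bigD1 k) //= eqxx.
rewrite (eq_bigr Y); last by move=> i ik; rewrite (negbTE ik).
ring.
Qed.


Definition W (p : 'I_n -> 'I_n -> R) t (s : t.-tuple (action n)) : R :=
  \prod_(i < t) act_prob p (tnth s i).

Lemma W_cons p t a (s : t.-tuple (action n)) :
  W p [tuple of a :: s] = act_prob p a * W p s.
Proof.
rewrite /W big_ord_recl tnth0; congr (_ * _); apply: eq_bigr => i _.
by rewrite tnthS.
Qed.

Lemma sum_tuple_cons t (G : (t.+1).-tuple (action n) -> R) :
  \sum_(s : (t.+1).-tuple (action n)) G s =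
  \sum_(a : action n) \sum_(s : t.-tuple (action n)) G [tuple of a :: s].
Proof.
rewrite pair_big /=.
rewrite (reindex (fun q : action n * t.-tuple (action n) => [tuple of q.1 :: q.2])) //=.
exists (fun s : (t.+1).-tuple (action n) => (thead s, [tuple of behead s])).
  by move=> [a s] _ /=; congr pair; apply: val_inj.
by move=> s _; rewrite [RHS]tuple_eta; apply: val_inj.
Qed.

Lemma sum_tuple0 (G : 0.-tuple (action n) -> R) :
  \sum_(s : 0.-tuple (action n)) G s = G [tuple].
Proof.
rewrite (eq_bigr (fun _ => G [tuple])); last by move=> s _; rewrite tuple0.
by rewrite sumr_const card_tuple expn0.
Qed.

Lemma Exp_cons p t (F : seq (action n) -> R) :
  \sum_(s : (t.+1).-tuple (action n)) W p s * F s =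
  \sum_(a : action n) act_prob p a *
     \sum_(s : t.-tuple (action n)) W p s * F (a :: s).
Proof.
rewrite sum_tuple_cons; apply: eq_bigr => a _; rewrite mulr_sumr.
by apply: eq_bigr => s _; rewrite W_cons /= mulrA.
Qed.

Lemma Exp0 p (F : seq (action n) -> R) :
  \sum_(s : 0.-tuple (action n)) W p s * F s = F [::].
Proof. by rewrite sum_tuple0 /W big_ord0 mul1r. Qed.


Definition Mx (adj : rel 'I_n) (p : 'I_n -> 'I_n -> R) : R :=
  \big[Num.max/0]_(k < n) \sum_(l < n | adj k l) p k l.

Lemma p_comp_ge0 p : p_comm p <= 1 -> 0 <= p_comp p.
Proof. by rewrite /p_comp subr_ge0. Qed.

Lemma act_prob_ge0 p : p_comm p <= 1 -> (forall k l, 0 <= p k l) ->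
  forall a, 0 <= act_prob p a.
Proof.
move=> h1 h2 [[k l]|k] /=; first by case: ifP.
by rewrite divr_ge0 // p_comp_ge0.
Qed.

Lemma sum_act_prob p : (0 < n)%N -> \sum_(a : action n) act_prob p a = 1.
Proof.
move=> n0; rewrite big_sumType /=.
have -> : \sum_(x : 'I_n * 'I_n) act_prob p (inl x) =
          \sum_(k < n) \sum_(l < n) (if (k < l)%N then p k l else 0).
  by rewrite pair_big; apply: eq_bigr => -[k l].
rewrite sumr_const card_ord -(mulr_natr (p_comp p / n%:R)) divfK ?pnatr_eq0 -?lt0n //.
rewrite /p_comp /p_comm; under [X in X + _]eq_bigr do rewrite -big_mkcond.
lra.
Qed.

Lemma Mx_ge0 adj p : 0 <= Mx adj p.
Proof.
rewrite /Mx; elim/big_rec: _ => // i x _ hx.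
by rewrite le_max hx orbT.
Qed.

Lemma row_le_Mx adj p : (forall k l, ~~ adj k l -> p k l = 0) ->
  forall k, \sum_(l < n) p k l <= Mx adj p.
Proof.
move=> h k; rewrite /Mx; apply: le_trans (le_bigmax _ _ k).
rewrite [X in _ <= X]big_mkcond /=; apply: ler_sum => l _.
by case: ifP => // /negbT /h ->.
Qed.

Lemma expect_step adj p (E1 Et : R) (Y : 'I_n -> R) :
  (0 < n)%N -> p_comm p <= 1 -> (forall k l, 0 <= p k l) -> (forall k l, p k l = p l k) ->
  (forall k l, ~~ adj k l -> p k l = 0) -> 1 <= Et ->
  (forall i, 0 <= Y i) ->
  \sum_(a : action n) act_prob p a * \sum_i stepY E1 Et Y a i <=
  (1 + (p_comp p * (E1 - 1) / n%:R + (2 * Et - 1) * Mx adj p)) * \sum_i Y i.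
Proof.
move=> n0 hc hp hs hadj hEt hY.
set S := \sum_i Y i; set c := 2 * Et - 1; set M := Mx adj p.
have c0 : 0 <= c by rewrite /c; lra.
rewrite big_sumType /=.
have -> : \sum_(x : 'I_n * 'I_n) act_prob p (inl x) * \sum_i stepY E1 Et Y (inl x) i
   = \sum_(k < n) \sum_(l < n)
       (if (k < l)%N then p k l * S + c * (p k l * (Y k + Y l)) else 0).
  rewrite pair_big; apply: eq_bigr => -[k l] _; rewrite [act_prob _ _]/=; case: ifP => kl; last by rewrite mul0r.
  rewrite sum_stepY_comm; first by rewrite -/S -/c; ring.
  by apply/negP => /eqP e; rewrite e ltnn in kl.
have -> : \sum_(k < n) act_prob p (inr k) * \sum_i stepY E1 Et Y (inr k) i =
   p_comp p * S + p_comp p * (E1 - 1) / n%:R * S.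
  rewrite (eq_bigr (fun k => p_comp p / n%:R * S + p_comp p / n%:R * (E1 - 1) * Y k));
    last by move=> k _; rewrite sum_stepY_loc /= -/S; ring.
  rewrite big_split /= sumr_const card_ord -mulr_sumr -/S -(mulr_natl (p_comp p / n%:R * S)).
  have nz : n%:R != 0 :> R by rewrite pnatr_eq0 -lt0n.
  by field.
have -> : \sum_(k < n) \sum_(l < n)
       (if (k < l)%N then p k l * S + c * (p k l * (Y k + Y l)) else 0) =
   p_comm p * S + c * \sum_(k < n) \sum_(l < n)
        (if (k < l)%N then p k l * (Y k + Y l) else 0).
  rewrite /p_comm mulr_suml mulr_sumr -big_split /=; apply: eq_bigr => k _.
  rewrite [X in _ = X * _ + _]big_mkcond mulr_suml mulr_sumr -big_split /=; apply: eq_bigr => l _.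
  by case: ifP => _; rewrite ?mul0r ?mulr0 ?addr0.
have X_le : \sum_(k < n) \sum_(l < n) (if (k < l)%N then p k l * (Y k + Y l) else 0)
            <= M * S.
  have -> : \sum_(k < n) \sum_(l < n) (if (k < l)%N then p k l * (Y k + Y l) else 0)
     = \sum_(k < n) \sum_(l < n) (if (k < l)%N then p k l * Y k else 0)
       + \sum_(k < n) \sum_(l < n) (if (l < k)%N then p k l * Y k else 0).
    rewrite [X in _ = _ + X]exchange_big -big_split /=; apply: eq_bigr => k _.
    rewrite -big_split /=; apply: eq_bigr => l _.
    by case: ifP => _; rewrite ?addr0 // hs mulrDr.
  rewrite -big_split /= /S mulr_sumr; apply: ler_sum => k _.
  rewrite -big_split /=; apply: le_trans _ (ler_wpM2r (hY k) (row_le_Mx hadj k)).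
  rewrite mulr_suml; apply: ler_sum => l _.
  by case: ltngtP => _; rewrite ?add0r ?addr0 //; apply: mulr_ge0.
have hS : 0 <= S by rewrite /S sumr_ge0.
have := ler_wpM2l c0 X_le.
rewrite /p_comp; lra.
Qed.


Lemma stepY_ge0 E1 Et Y a : 0 <= E1 -> 0 <= Et -> (forall i, 0 <= Y i) ->
  forall i, 0 <= stepY E1 Et Y a i.
Proof.
move=> h1 h2 hY i; case: a => [[k l]|k] /=; case: ifP => _ //.
  by rewrite mulr_ge0 // addr_ge0.
by rewrite mulr_ge0.
Qed.

Lemma sumW1 p t : (0 < n)%N -> \sum_(s : t.-tuple (action n)) W p s * 1 = 1.
Proof.
move=> n0; elim: t => [|t IH]; first by rewrite (Exp0 p (fun _ => 1)).
rewrite (Exp_cons p t (fun _ => 1)) (eq_bigr (fun a => act_prob p a)); first exact: sum_act_prob.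
by move=> a _; rewrite IH mulr1.
Qed.

Lemma EY adj p (E1 Et : R) t (Y0 : 'I_n -> R) :
  (0 < n)%N -> p_comm p <= 1 -> (forall k l, 0 <= p k l) -> (forall k l, p k l = p l k) ->
  (forall k l, ~~ adj k l -> p k l = 0) -> 1 <= Et -> 1 <= E1 ->
  (forall i, 0 <= Y0 i) ->
  \sum_(s : t.-tuple (action n)) W p s * \sum_i foldl (stepY E1 Et) Y0 s i <=
  (1 + (p_comp p * (E1 - 1) / n%:R + (2 * Et - 1) * Mx adj p)) ^+ t * \sum_i Y0 i.
Proof.
move=> n0 hc hp hs hadj hEt hE1; elim: t Y0 => [|t IH] Y0 hY.
  by rewrite (Exp0 p (fun s => \sum_i foldl (stepY E1 Et) Y0 s i)) expr0 mul1r.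
rewrite (Exp_cons p t (fun s => \sum_i foldl (stepY E1 Et) Y0 s i)) /=.
set r := (1 + _).
apply: le_trans (_ : \sum_a act_prob p a * (r ^+ t * \sum_i stepY E1 Et Y0 a i) <= _).
  apply: ler_sum => a _; apply: ler_wpM2l; first exact: act_prob_ge0.
  apply: IH; apply: stepY_ge0 => //; lra.
rewrite (eq_bigr (fun a => r ^+ t * (act_prob p a * \sum_i stepY E1 Et Y0 a i)));
  last by move=> a _; rewrite mulrCA.
rewrite -mulr_sumr exprSr -mulrA; apply: ler_wpM2l.
  apply: exprn_ge0; rewrite /r addr_ge0 ?ler01 // addr_ge0 //.
    by apply: divr_ge0 => //; apply: mulr_ge0; [exact: p_comp_ge0 | lra].
  by apply: mulr_ge0; [lra | exact: Mx_ge0].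
exact: expect_step.
Qed.

End Aux.

Section Main.
Variable R : realType.

Lemma expR1_le4 : expR 1 <= 4 :> R.
Proof.
have h := expR_ge1Dx (- (1/2) : R).
have e : expR (1/2) * expR (- (1/2)) = 1 :> R by rewrite -expRD subrr expR0.
have e1 : expR 1 = expR (1/2) * expR (1/2) :> R.
  by rewrite -expRD; congr expR; field.
have x0 := expR_ge0 (1/2 : R).
rewrite e1; nra.
Qed.

Lemma expm1_le (th : R) : 0 <= th -> th <= 1 -> expR th - 1 <= 4 * th.
Proof.
move=> t0 t1.
have h := expR_ge1Dx (- th).
have e : expR th * expR (- th) = 1 :> R by rewrite -expRD subrr expR0.
have x4 : expR th <= 4 by apply: le_trans expR1_le4; rewrite ler_expR.
have x0 := expR_ge0 th.
nra.
Qed.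

Lemma total_bound n (th tau : R) (s : seq (action n)) :
  0 <= th ->
  expR (th * total_time tau s) <=
  1 + \sum_i foldl (stepY (expR th) (expR (th * tau))) (fun _ => 1) s i.
Proof.
move=> th0.
have H := @dom_fold R n th tau s (fun _ => 0) (fun _ => 1).
have {}H : forall i, expR (th * node_times tau s i) <=
   foldl (stepY (expR th) (expR (th * tau))) (fun _ => 1) s i.
  by apply: H => i; rewrite mulr0 expR0.
have Y0 : forall i, 0 <= foldl (stepY (expR th) (expR (th * tau))) (fun _ => 1) s i.
  by move=> i; apply: le_trans (H i); exact: expR_ge0.
have S0 : 0 <= \sum_i foldl (stepY (expR th) (expR (th * tau))) (fun _ => 1) s i.
  exact: sumr_ge0.
rewrite /total_time; elim/big_ind: _.
- by rewrite mulr0 expR0 lerDl.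
- move=> x y hx hy; rewrite maxEle; case: ifP => _ //.
- move=> i _; apply: le_trans (H i) _.
  by rewrite (bigD1 i) //= addrCA lerDl addr_ge0 // sumr_ge0 // => j _.
Qed.


Lemma pos_AB n (adj : rel 'I_n) (p : 'I_n -> 'I_n -> R) : (0 < n)%N ->
  (forall k l, 0 <= p k l) -> (forall k l, ~~ adj k l -> p k l = 0) ->
  p_comm p <= 1 -> 0 < p_comp p + p_comm_max adj p.
Proof.
move=> n0 hp hadj hc; have Ac := p_comp_ge0 hc.
have B0 : 0 <= p_comm_max adj p.
  by rewrite /p_comm_max mulr_ge0 ?divr_ge0 //; exact: (Mx_ge0 adj p).
have [A0|A0] := ltP 0 (p_comp p); first by rewrite ltr_wpDr.
have [/existsP [k /existsP [l /andP [kl pkl]]] | none] :=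
  boolP [exists k : 'I_n, exists l : 'I_n, (k < l)%N && (0 < p k l)].
  have akl : adj k l by apply/negPn/negP => /hadj e; rewrite e ltxx in pkl.
  have : 0 < p_comm_max adj p.
    rewrite /p_comm_max mulr_gt0 ?divr_gt0 ?ltr0n //.
    apply: lt_le_trans pkl _; apply: le_trans (le_bigmax _ _ k).
    by rewrite (bigD1 l) //= lerDl sumr_ge0.
  by move=> h; rewrite ltr_wpDl.
have pc0 : p_comm p = 0.
  rewrite /p_comm big1 // => k _; rewrite big1 // => l kl.
  move/existsPn: none => /(_ k) /existsPn /(_ l); rewrite kl /= -leNgt => h.
  by apply/eqP; rewrite eq_le h hp.
by move: A0; rewrite /p_comp pc0 subr0 ler10.
Qed.

Lemma theorem2_aux (n : nat) (adj : rel 'I_n)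
    (p : 'I_n -> 'I_n -> R) (tau : R) :
  (0 < n)%N ->
  (forall k l, adj k l = adj l k) ->
  (forall k, ~~ adj k k) ->
  (forall k l, p k l = p l k) ->
  (forall k l, 0 <= p k l) ->
  (forall k l, ~~ adj k l -> p k l = 0) ->
  p_comm p <= 1 ->
  0 < tau ->
  (p_comm_max adj p < p_comp p \/ 1 < tau) ->
  exists C : R, C < 24 /\
    (fun t : nat =>
       sched_prob p (fun s : t.-tuple (action n) =>
         total_time tau (tval s) / t%:R
           <= C / n%:R * (p_comp p + 2 * tau * p_comm_max adj p)))
    @ \oo --> (1 : R).
Proof.
move=> n0 hsym hirr hs hp hadj hc htau hcase.
set A := p_comp p; set B := p_comm_max adj p.
have A0 : 0 <= A := p_comp_ge0 hc.
have B0 : 0 <= B.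
  by rewrite /B /p_comm_max mulr_ge0 ?divr_ge0 //; exact: (Mx_ge0 adj p).
have nz : n%:R != 0 :> R by rewrite pnatr_eq0 -lt0n.
have npos : 0 < n%:R :> R by rewrite ltr0n.
have BM : 2 * B = n%:R * Mx adj p by rewrite /B /p_comm_max /Mx; field.
have [th [th0 [th1 [tht key]]]] : exists th : R, 0 < th /\ th <= 1 /\ th * tau <= 1 /\
   A * (expR th - 1) + 2 * B * (2 * expR (th * tau) - 1) < th * 23 * (A + 2 * tau * B).
  have [t1|t1] := ltP 1 tau.
    exists tau^-1; have e : tau^-1 * tau = 1 by rewrite mulVf // gt_eqF.
    have ti0 : 0 < tau^-1 by rewrite invr_gt0.
    split => //; split; first by rewrite invf_le1 // ltW.
    split; first by rewrite e.
    rewrite e.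
    have thi1 : tau^-1 <= 1 by rewrite invf_le1 // ltW.
    have h1 := expm1_le (ltW ti0) thi1.
    have e4 := expR1_le4.
    have hA : A * (expR tau^-1 - 1) <= A * (4 * tau^-1) by rewrite ler_wpM2l.
    have hB : B * expR 1 <= B * 4 by rewrite ler_wpM2l.
    have hr : tau^-1 * 23 * (A + 2 * tau * B) = 23 * (tau^-1 * A) + 46 * (tau^-1 * tau) * B.
      by ring.
    rewrite e mulr1 in hr; rewrite hr.
    have pAB := pos_AB n0 hp hadj hc; rewrite -/A -/B in pAB.
    have h3 : 0 < tau^-1 * (A + B) by rewrite mulr_gt0.
    have h4 : tau^-1 * B <= B by rewrite ler_piMl.
    have h5 : 0 <= tau^-1 * A by rewrite mulr_ge0 // ltW.
    rewrite mulrDr in h3; lra.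
  exists 1; split => //; split => //; split; first by rewrite mul1r.
  have BA : B < A by case: hcase => // h; move: t1; rewrite leNgt h.
  have e4 := expR1_le4.
  have h1 := expm1_le (@ler01 R) (lexx (1:R)).
  have hEt : expR (1 * tau) <= 4 by apply: le_trans e4; rewrite ler_expR mul1r.
  have hA : A * (expR 1 - 1) <= A * (4 * 1) by rewrite ler_wpM2l.
  have hB : B * expR (1 * tau) <= B * 4 by rewrite ler_wpM2l.
  have htB : 0 <= tau * B by rewrite mulr_ge0 // ltW.
  lra.
set E1 := expR th; set Et := expR (th * tau).
have E1ge : 1 <= E1 by have := expR_ge1Dx th; rewrite /E1; lra.
have Etge : 1 <= Et.
  have := expR_ge1Dx (th * tau); have : 0 <= th * tau by rewrite mulr_ge0 // ltW.
  rewrite /Et; lra.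
set M := Mx adj p.
have MB : M = 2 * B / n%:R.
  by rewrite BM /M; field.
set r := A * (E1 - 1) / n%:R + (2 * Et - 1) * M.
set a := 23 / n%:R * (A + 2 * tau * B).
have r0 : 0 <= r.
  rewrite /r addr_ge0 //; first by rewrite divr_ge0 // mulr_ge0 // subr_ge0.
  by rewrite mulr_ge0 ?Mx_ge0 //; lra.
have dpos : 0 < th * a - r.
  have -> : th * a - r =
      (th * 23 * (A + 2 * tau * B) - (A * (E1 - 1) + 2 * B * (2 * Et - 1))) / n%:R.
    by rewrite /a /r MB; field.
  by apply: divr_gt0 => //; rewrite subr_gt0.
set d := th * a - r.
have a0 : 0 <= a by rewrite /a mulr_ge0 ?divr_ge0 // addr_ge0 // mulr_ge0 // mulr_ge0 // ltW.
exists 23; split; first by lra.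
set z := expR (- d).
have z01 : `|z| < 1 by rewrite ger0_norm ?expR_ge0 // expR_lt1 oppr_lt0.
apply: (@squeeze_cvgr _ _ _ _ (fun t => 1 - geometric (1 + n%:R) z t) (fun _ => 1)).
- apply: nearW => t; rewrite -/a /sched_prob big_mkcond /=.
  have Wge0 : forall s : t.-tuple (action n), 0 <= W p s.
    move=> s; apply: prodr_ge0 => i _; exact: act_prob_ge0.
  apply/andP; split; last first.
    rewrite -[X in _ <= X](sumW1 p t n0); apply: ler_sum => s _.
    by case: ifP => _; rewrite mulr1 ?Wge0.
  set Ys := fun s : seq (action n) => \sum_i foldl (stepY E1 Et) (fun _ => 1) s i.
  have Ys0 : forall s, 0 <= Ys s.
    move=> s; apply: sumr_ge0 => i _.
    apply: le_trans (dom_fold (T0 := fun _ => 0) (Y0 := fun _ => 1) tau s _ i).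
      exact: expR_ge0.
    by move=> j; rewrite mulr0 expR0.
  set q := expR (- (th * a * t%:R)).
  have q0 : 0 <= q := expR_ge0 _.
  have L1 : \sum_(s : t.-tuple (action n)) W p s * (1 - (1 + Ys s) * q) <=
      \sum_(s : t.-tuple (action n))
        (if total_time tau s / t%:R <= a then \prod_(i < t) act_prob p (tnth s i) else 0).
    apply: ler_sum => s _.
    have hW := Wge0 s; have hY := Ys0 s.
    have hX : 0 <= W p s * ((1 + Ys s) * q) by rewrite mulr_ge0 // mulr_ge0 // addr_ge0.
    case: ifP => hE.
      rewrite -/(W p s); lra.
    have tpos : (0 < t)%N.
      rewrite lt0n; apply/negP => /eqP t0; move: hE; rewrite (_ : t%:R = 0 :> R) ?t0 // invr0 mulr0 a0 //.
    have tR : 0 < t%:R :> R by rewrite ltr0n.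
    move/negbT: hE; rewrite -ltNge ltr_pdivlMr // => hE.
    have hT := total_bound tau s (ltW th0); rewrite -/E1 -/Et -/(Ys s) in hT.
    have h1 : 1 < expR (th * total_time tau s) * q.
      rewrite /q -expRD expR_gt1 -mulrA -mulrN -mulrDr mulr_gt0 // subr_gt0 //.
    have h2 : expR (th * total_time tau s) * q <= (1 + Ys s) * q by rewrite ler_wpM2r.
    apply: mulr_ge0_le0 => //; lra.
  have L2 : \sum_(s : t.-tuple (action n)) W p s * (1 - (1 + Ys s) * q) =
      1 - q - q * \sum_(s : t.-tuple (action n)) W p s * Ys s.
    rewrite (eq_bigr (fun s => W p s * 1 - q * (W p s * 1) - q * (W p s * Ys s)));
      last by move=> s _; ring.
    by rewrite !sumrB -!mulr_sumr (sumW1 p t n0) mulr1.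
  have L3 : \sum_(s : t.-tuple (action n)) W p s * Ys s <= (1 + r) ^+ t * n%:R.
    have := EY (E1 := E1) (Et := Et) t (Y0 := fun _ => 1) n0 hc hp hs hadj Etge E1ge.
    rewrite sumr_const card_ord -/M -/r; apply => i; exact: ler01.
  have L4 : (1 + r) ^+ t <= expR (r * t%:R).
    rewrite expRM_natr; apply: lerXn2r; rewrite ?nnegrE ?expR_ge0 ?expR_ge1Dx //.
    by rewrite addr_ge0.
  have G : z ^+ t = expR (- d * t%:R) by rewrite /z expRM_natr.
  have f1 : q <= expR (- d * t%:R).
    rewrite /q ler_expR mulNr lerN2 ler_wpM2r ?ler0n //.
    by rewrite /d lerBlDr lerDl.
  have f2 : q * expR (r * t%:R) = expR (- d * t%:R).
    by rewrite /q -expRD; congr expR; rewrite /d; ring.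
  have f3 : q * \sum_(s : t.-tuple (action n)) W p s * Ys s <= n%:R * expR (- d * t%:R).
    apply: le_trans (ler_wpM2l q0 L3) _.
    have h := ler_wpM2l (mulr_ge0 q0 (ler0n R n)) L4; rewrite -f2; nra.
  rewrite /= G; apply: le_trans L1; rewrite L2; lra.
- rewrite -[X in _ --> X](subr0 (1:R)).
  exact: (cvgB (cvg_cst (1:R)) (cvg_geometric (1 + n%:R) z01)).
- exact: cvg_cst.
Qed.

End Main.

Unset Implicit Arguments. Set Strict Implicit. Set Printing Implicit Defensive.

Theorem theorem2 (R : realType) (n : nat) (adj : rel 'I_n)
    (p : 'I_n -> 'I_n -> R) (tau : R) :
  (0 < n)%N ->
  (* undirected simple communication graph *)
  (forall k l, adj k l = adj l k) ->
  (forall k, ~~ adj k k) ->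
  (* edge probabilities: symmetric, nonnegative, supported on the graph *)
  (forall k l, p k l = p l k) ->
  (forall k l, 0 <= p k l) ->
  (forall k l, ~~ adj k l -> p k l = 0) ->
  p_comm p <= 1 ->
  0 < tau ->
  (p_comm_max adj p < p_comp p \/ 1 < tau) ->
  exists C : R, C < 24 /\
    (fun t : nat =>
       sched_prob p (fun s : t.-tuple (action n) =>
         total_time tau (tval s) / t%:R
           <= C / n%:R * (p_comp p + 2 * tau * p_comm_max adj p)))
    @ \oo --> (1 : R).
Proof. exact: theorem2_aux. Qed.
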